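(* Let $\gamma\in[0,1)$, $\lambda\ge0$, let $V$ be the value function defined in the context, and let $V_{CQL}$ be the unique bounded fixed point of the CQL Bellman backup $B_{CQL}$ defined in the context. Then $$V(x)-\frac{\lambda}{1-\gamma}\le V_{CQL}(x)\le V(x)-\lambda\quad\text{for all }x\in\mathbb{R}^n.$$
   Context: Setting: States $x\in\mathbb{R}^n$; compact sets $\mathcal{U}\subseteq\mathbb{R}^m$ (controls) and $\mathcal{D}\subseteq\mathbb{R}^\ell$ (disturbances); dynamics $f:\mathbb{R}^n\times\mathcal{U}\times\mathcal{D}\to\mathbb{R}^n$, Lipschitz continuous in the state. For sequences $\mathbf{u}=\{u_t\}_{t\ge0}\subset\mathcal{U}$, $\mathbf{d}=\{d_t\}_{t\ge0}\subset\mathcal{D}$, the trajectory is $\xi_x^{\mathbf{u},\mathbf{d}}(0)=x$, $\xi_x^{\mathbf{u},\mathbf{d}}(t+1)=f(\xi_x^{\mathbf{u},\mathbf{d}}(t),u_t,d_t)$ for $t\in\mathbb{Z}_+$. Let $r,c:\mathbb{R}^n\to\mathbb{R}$ be bounded Lipschitz continuous functions. A map $\phi$ from control sequences to disturbance sequences is a non-anticipative strategy if whenever $u_t=\bar u_t$ for all $t\in\{0,\dots,T\}$, then $\phi(\mathbf{u})_t=\phi(\bar{\mathbf{u}})_t$ for all $t\in\{0,\dots,T\}$; $\Phi$ is the set of all such strategies. Value function: $$V(x)=\inf_{\phi\in\Phi}\ \sup_{\mathbf{u}}\ \sup_{t\in\mathbb{Z}_+}\ \min\Big\{\gamma^t r\big(\xi_x^{\mathbf{u},\phi(\mathbf{u})}(t)\big),\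 \min_{\tau=0,\dots,t}\gamma^\tau c\big(\xi_x^{\mathbf{u},\phi(\mathbf{u})}(\tau)\big)\Big\}$$ (the paper writes $\max_{\mathbf{u}}$ over control sequences). Bellman backup, for bounded $U:\mathbb{R}^n\to\mathbb{R}$: $B[U](x)=\min\{c(x),\max\{r(x),\gamma\max_{u\in\mathcal{U}}\min_{d\in\mathcal{D}}U(f(x,u,d))\}\}$. CQL Bellman backup: $B_{CQL}[U](x)=B[U](x)-\lambda$; this is a $\gamma$-contraction in the sup norm on bounded functions, and $V_{CQL}$ denotes its unique bounded fixed point (the limit of the iteration $V^{(k+1)}=B_{CQL}[V^{(k)}]$ from any bounded initial function). *)

(* Defs.v *)
From HB Require Import structures.
From mathcomp Require Import all_boot all_order all_algebra.
From mathcomp Require Import all_classical all_reals all_analysis.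
Set Implicit Arguments. Unset Strict Implicit. Unset Printing Implicit Defensive.
Import Order.TTheory GRing.Theory Num.Theory.
Import numFieldNormedType.Exports.
Local Open Scope classical_set_scope.
Local Open Scope ring_scope.

Section Game.
Variables (R : realType) (n m l : nat).
Notation X := 'rV[R]_n.
Notation Uv := 'rV[R]_m.
Notation Dv := 'rV[R]_l.

Fixpoint traj (f : X -> Uv -> Dv -> X) (x : X) (u : nat -> Uv) (d : nat -> Dv)
  (t : nat) : X :=
  match t with
  | 0%N => x
  | t'.+1 => f (traj f x u d t') (u t') (d t')
  end.

Fixpoint run_min (gamma : R) (c : X -> R) (xi : nat -> X) (t : nat) : R :=
  match t with
  | 0%N => c (xi 0%N)
  | t'.+1 => Num.min (run_min gamma c xi t') (gamma ^+ t'.+1 * c (xi t'.+1))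
  end.

Definition payoff (gamma : R) (r c : X -> R) (f : X -> Uv -> Dv -> X)
  (x : X) (u : nat -> Uv) (d : nat -> Dv) : R :=
  sup [set Num.min (gamma ^+ t * r (traj f x u d t))
                   (run_min gamma c (traj f x u d) t) | t in [set: nat]].

Definition ctrl_seqs (U : set Uv) : set (nat -> Uv) :=
  [set u | forall t, U (u t)].

Definition nonanticipative (U : set Uv) (D : set Dv) :
  set ((nat -> Uv) -> (nat -> Dv)) :=
  [set phi | (forall u, ctrl_seqs U u -> forall t, D (phi u t)) /\
     (forall u ubar T, ctrl_seqs U u -> ctrl_seqs U ubar ->
        (forall t, (t <= T)%N -> u t = ubar t) ->
        forall t, (t <= T)%N -> phi u t = phi ubar t)].

Definition value (gamma : R) (U : set Uv) (D : set Dv)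
  (f : X -> Uv -> Dv -> X) (r c : X -> R) (x : X) : R :=
  inf [set sup [set payoff gamma r c f x u (phi u) | u in ctrl_seqs U]
       | phi in nonanticipative U D].

Definition bellman (gamma : R) (U : set Uv) (D : set Dv)
  (f : X -> Uv -> Dv -> X) (r c : X -> R) (W : X -> R) (x : X) : R :=
  Num.min (c x) (Num.max (r x)
    (gamma * sup [set inf [set W (f x u d) | d in D] | u in U])).

Definition bellman_cql (gamma lam : R) (U : set Uv) (D : set Dv)
  (f : X -> Uv -> Dv -> X) (r c : X -> R) (W : X -> R) (x : X) : R :=
  bellman gamma U D f r c W x - lam.

Definition sup_bounded (T : Type) (g : T -> R) : Prop :=
  exists M : R, forall y, `|g y| <= M.

Definition lipschitz_fun (g : X -> R) : Prop :=
  exists L : R, forall x y, `|g x - g y| <= L * `|x - y|.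

Definition lipschitz_in_state (U : set Uv) (D : set Dv)
  (f : X -> Uv -> Dv -> X) : Prop :=
  exists L : R, forall x y u d, U u -> D d ->
    `|f x u d - f y u d| <= L * `|x - y|.

End Game.

(* Main.v *)
Require Import Defs.
From HB Require Import structures.
From mathcomp Require Import all_boot all_order all_algebra.
From mathcomp Require Import all_classical all_reals all_analysis.
From mathcomp Require Import ring lra.
Import Order.TTheory GRing.Theory Num.Theory.
Import numFieldNormedType.Exports.
Local Open Scope classical_set_scope.
Local Open Scope ring_scope.
Set Implicit Arguments. Unset Strict Implicit.

Ltac mm := rewrite ?minEle ?maxEle; repeat match goal with |- context [if ?a <= ?b then _ else _] => case: (leP a b) end; move=> *; lra.

Lemma sup_img_le (R : realType) (T : Type) (A : set T) (F : T -> R) (b : R) :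
  A !=set0 -> (forall a, A a -> F a <= b) -> sup [set F a | a in A] <= b.
Proof.
move=> [a Aa] H; apply: ge_sup; first by exists (F a), a.
by move=> _ [a' Aa' <-]; exact: H.
Qed.

Lemma le_sup_img (R : realType) (T : Type) (A : set T) (F : T -> R) (M : R) a0 :
  (forall a, A a -> F a <= M) -> A a0 -> F a0 <= sup [set F a | a in A].
Proof.
move=> H Aa0; apply: ub_le_sup; last by exists a0.
by exists M => _ [a Aa <-]; exact: H.
Qed.

Lemma inf_img_ge (R : realType) (T : Type) (A : set T) (F : T -> R) (b : R) :
  A !=set0 -> (forall a, A a -> b <= F a) -> b <= inf [set F a | a in A].
Proof.
move=> [a Aa] H; apply: lb_le_inf; first by exists (F a), a.
by move=> _ [a' Aa' <-]; exact: H.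
Qed.

Lemma inf_img_le (R : realType) (T : Type) (A : set T) (F : T -> R) (M : R) a0 :
  (forall a, A a -> M <= F a) -> A a0 -> inf [set F a | a in A] <= F a0.
Proof.
move=> H Aa0; apply: ge_inf; last by exists a0.
by exists M => _ [a Aa <-]; exact: H.
Qed.

Lemma norm_sup_img (R : realType) (T : Type) (A : set T) (F : T -> R) (M : R) :
  A !=set0 -> (forall a, A a -> `|F a| <= M) -> `|sup [set F a | a in A]| <= M.
Proof.
move=> [a0 Aa0] H.
have H1 : forall a, A a -> - M <= F a /\ F a <= M.
  by move=> a Aa; have := H a Aa; rewrite ler_norml => /andP[].
rewrite ler_norml; apply/andP; split.
- apply: (le_trans _ (le_sup_img (fun a Aa => proj2 (H1 a Aa)) Aa0)).
  by case: (H1 _ Aa0).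
- by apply: sup_img_le; [exists a0 | move=> a Aa; case: (H1 _ Aa)].
Qed.

Lemma norm_inf_img (R : realType) (T : Type) (A : set T) (F : T -> R) (M : R) :
  A !=set0 -> (forall a, A a -> `|F a| <= M) -> `|inf [set F a | a in A]| <= M.
Proof.
move=> [a0 Aa0] H.
have H1 : forall a, A a -> - M <= F a /\ F a <= M.
  by move=> a Aa; have := H a Aa; rewrite ler_norml => /andP[].
rewrite ler_norml; apply/andP; split.
- by apply: inf_img_ge; [exists a0 | move=> a Aa; case: (H1 _ Aa)].
- apply: (le_trans (inf_img_le (fun a Aa => proj1 (H1 a Aa)) Aa0)).
  by case: (H1 _ Aa0).
Qed.

Definition gB (R : realType) (gamma cx rx z : R) := Num.min cx (Num.max rx (gamma * z)).

Lemma gB_mono (R : realType) (gamma cx rx z1 z2 : R) :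
  0 <= gamma -> z1 <= z2 -> gB gamma cx rx z1 <= gB gamma cx rx z2.
Proof.
move=> g0 z12; have : gamma * z1 <= gamma * z2 by rewrite ler_wpM2l.
rewrite /gB; mm.
Qed.

Lemma gB_shift (R : realType) (gamma cx rx z b : R) :
  0 <= gamma -> gB gamma cx rx (z + b) <= gB gamma cx rx z + Num.max (gamma * b) 0.
Proof. by move=> g0; rewrite /gB mulrDr; mm. Qed.

Lemma gB_sup (R : realType) (T : Type) (A : set T) (F : T -> R) (M gamma cx rx s : R) :
  0 <= gamma -> A !=set0 -> (forall a, A a -> F a <= M) ->
  (forall a, A a -> gB gamma cx rx (F a) <= s) ->
  gB gamma cx rx (sup [set F a | a in A]) <= s.
Proof.
rewrite /gB => g0 [a0 Aa0] FM H.
case: (leP cx s) => hcs; first by rewrite ge_min hcs.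
have H' : forall a, A a -> rx <= s /\ gamma * F a <= s.
  by move=> a Aa; move: (H a Aa) hcs; mm.
rewrite ge_min; apply/orP; right; rewrite ge_max; case: (H' a0 Aa0) => -> _ /=.
case: (eqVneq gamma 0) => [g00|gn0].
  by rewrite g00 mul0r; case: (H' a0 Aa0) => _; rewrite g00 mul0r.
have gpos : 0 < gamma by rewrite lt_def gn0 g0.
rewrite -ler_pdivlMl //; apply: sup_img_le; first by exists a0.
by move=> a Aa; rewrite ler_pdivlMl //; case: (H' a Aa).
Qed.

Definition shift (T : Type) (u : nat -> T) : nat -> T := fun t => u t.+1.

Lemma traj_S (R : realType) (n m l : nat) (f : 'rV[R]_n -> 'rV[R]_m -> 'rV[R]_l -> 'rV[R]_n)
  x u d t : traj f x u d t.+1 = f (traj f x u d t) (u t) (d t).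
Proof. by []. Qed.

Lemma run_min_S (R : realType) (n : nat) (g : R) (c : 'rV[R]_n -> R) xi t :
  run_min g c xi t.+1 = Num.min (run_min g c xi t) (g ^+ t.+1 * c (xi t.+1)).
Proof. by []. Qed.

Lemma traj_shift (R : realType) (n m l : nat) (f : 'rV[R]_n -> 'rV[R]_m -> 'rV[R]_l -> 'rV[R]_n)
  x u d t : traj f x u d t.+1 = traj f (f x (u 0%N) (d 0%N)) (shift u) (shift d) t.
Proof. by elim: t => [//|t IH]; rewrite traj_S IH. Qed.

Lemma run_min_shift (R : realType) (n m l : nat) (f : 'rV[R]_n -> 'rV[R]_m -> 'rV[R]_l -> 'rV[R]_n)
  (gamma : R) (c : 'rV[R]_n -> R) x u d t : 0 <= gamma ->
  run_min gamma c (traj f x u d) t.+1 =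
  Num.min (c x) (gamma * run_min gamma c (traj f (f x (u 0%N) (d 0%N)) (shift u) (shift d)) t).
Proof.
move=> g0; elim: t => [|t IH]; first by rewrite /= expr1.
rewrite run_min_S IH run_min_S minr_pMr // (traj_shift _ _ _ _ t.+1) exprS -mulrA.
by rewrite minA.
Qed.

Definition elem (R : realType) (n m l : nat) (gamma : R) (r c : 'rV[R]_n -> R)
  (f : 'rV[R]_n -> 'rV[R]_m -> 'rV[R]_l -> 'rV[R]_n) x u d t :=
  Num.min (gamma ^+ t * r (traj f x u d t)) (run_min gamma c (traj f x u d) t).

Lemma payoffE (R : realType) (n m l : nat) (gamma : R) (r c : 'rV[R]_n -> R)
  (f : 'rV[R]_n -> 'rV[R]_m -> 'rV[R]_l -> 'rV[R]_n) x u d :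
  payoff gamma r c f x u d = sup [set elem gamma r c f x u d t | t in [set: nat]].
Proof. by []. Qed.

Lemma elem0 (R : realType) (n m l : nat) (gamma : R) (r c : 'rV[R]_n -> R)
  (f : 'rV[R]_n -> 'rV[R]_m -> 'rV[R]_l -> 'rV[R]_n) x u d :
  elem gamma r c f x u d 0 = Num.min (r x) (c x).
Proof. by rewrite /elem /= expr0 mul1r. Qed.

Lemma elem_shift (R : realType) (n m l : nat) (gamma : R) (r c : 'rV[R]_n -> R)
  (f : 'rV[R]_n -> 'rV[R]_m -> 'rV[R]_l -> 'rV[R]_n) x u d t : 0 <= gamma ->
  elem gamma r c f x u d t.+1 =
  Num.min (c x) (gamma * elem gamma r c f (f x (u 0%N) (d 0%N)) (shift u) (shift d) t).
Proof.
move=> g0; rewrite /elem run_min_shift // traj_shift exprS -mulrA minr_pMr //.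
by rewrite minCA.
Qed.

Lemma norm_min (R : realType) (a b M : R) : `|a| <= M -> `|b| <= M -> `|Num.min a b| <= M.
Proof. by rewrite minEle; case: ifP. Qed.

Lemma norm_gpow (R : realType) (g a M : R) k : 0 <= g -> g <= 1 -> `|a| <= M ->
  `|g ^+ k * a| <= M.
Proof.
move=> g0 g1 ha; rewrite normrM ger0_norm ?exprn_ge0 //.
have := exprn_ile1 k g0 g1; have := normr_ge0 a; have := exprn_ge0 k g0.
move: ha; set p := g ^+ k; set q := `|a|; move=> *; nra.
Qed.

Lemma run_min_bound (R : realType) (n : nat) (g M : R) (c : 'rV[R]_n -> R) xi t :
  0 <= g -> g <= 1 -> (forall z, `|c z| <= M) -> `|run_min g c xi t| <= M.
Proof.
move=> g0 g1 hc; elim: t => [|t IH]; first exact: hc.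
rewrite run_min_S norm_min //.
exact: norm_gpow.
Qed.

Lemma elem_bound (R : realType) (n m l : nat) (gamma M : R) (r c : 'rV[R]_n -> R)
  (f : 'rV[R]_n -> 'rV[R]_m -> 'rV[R]_l -> 'rV[R]_n) x u d t :
  0 <= gamma -> gamma <= 1 -> (forall z, `|r z| <= M) -> (forall z, `|c z| <= M) ->
  `|elem gamma r c f x u d t| <= M.
Proof.
move=> g0 g1 hr hc; rewrite /elem norm_min //; first exact: norm_gpow.
exact: run_min_bound.
Qed.

Lemma payoff_bound (R : realType) (n m l : nat) (gamma M : R) (r c : 'rV[R]_n -> R)
  (f : 'rV[R]_n -> 'rV[R]_m -> 'rV[R]_l -> 'rV[R]_n) x u d :
  0 <= gamma -> gamma <= 1 -> (forall z, `|r z| <= M) -> (forall z, `|c z| <= M) ->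
  `|payoff gamma r c f x u d| <= M.
Proof.
move=> g0 g1 hr hc; rewrite payoffE; apply: norm_sup_img; first by exists 0%N.
by move=> t _; apply: elem_bound.
Qed.

Lemma payoff_rec (R : realType) (n m l : nat) (gamma M : R) (r c : 'rV[R]_n -> R)
  (f : 'rV[R]_n -> 'rV[R]_m -> 'rV[R]_l -> 'rV[R]_n) x u d :
  0 <= gamma -> gamma <= 1 -> (forall z, `|r z| <= M) -> (forall z, `|c z| <= M) ->
  payoff gamma r c f x u d =
  gB gamma (c x) (r x) (payoff gamma r c f (f x (u 0%N) (d 0%N)) (shift u) (shift d)).
Proof.
move=> g0 g1 hr hc.
have eb : forall x' u' d' t, elem gamma r c f x' u' d' t <= M.
  by move=> x' u' d' t; have := elem_bound f x' u' d' t g0 g1 hr hc; rewrite ler_norml => /andP[].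
apply/le_anti/andP; split.
- rewrite [X in X <= _]payoffE; apply: sup_img_le; first by exists 0%N.
  move=> [|t] _; first by rewrite elem0 /gB; mm.
  rewrite elem_shift //.
  have : elem gamma r c f (f x (u 0%N) (d 0%N)) (shift u) (shift d) t <=
         payoff gamma r c f (f x (u 0%N) (d 0%N)) (shift u) (shift d).
    by rewrite payoffE; apply: (le_sup_img (fun t _ => eb _ _ _ t)).
  move=> /(ler_wpM2l g0); rewrite /gB; mm.
- rewrite [X in gB _ _ _ X]payoffE; apply: (gB_sup g0 (M := M)); first by exists 0%N.
    by move=> t _; apply: eb.
  move=> t _.
  have h0 : elem gamma r c f x u d 0 <= payoff gamma r c f x u d.
    by rewrite payoffE; apply: (le_sup_img (fun t _ => eb _ _ _ t)).
  have h1 : elem gamma r c f x u d t.+1 <= payoff gamma r c f x u d.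
    by rewrite payoffE; apply: (le_sup_img (fun t _ => eb _ _ _ t)).
  move: h0 h1; rewrite elem0 elem_shift // /gB; mm.
Qed.

Definition scons (T : Type) (a : T) (u : nat -> T) : nat -> T :=
  fun t => match t with 0%N => a | t'.+1 => u t' end.

Definition J (R : realType) (n m l : nat) (gamma : R) (U : set 'rV[R]_m) (r c : 'rV[R]_n -> R)
  (f : 'rV[R]_n -> 'rV[R]_m -> 'rV[R]_l -> 'rV[R]_n) x (phi : (nat -> 'rV[R]_m) -> nat -> 'rV[R]_l) :=
  sup [set payoff gamma r c f x u (phi u) | u in ctrl_seqs U].

Lemma valueE (R : realType) (n m l : nat) (gamma : R) (U : set 'rV[R]_m) (D : set 'rV[R]_l)
  (f : 'rV[R]_n -> 'rV[R]_m -> 'rV[R]_l -> 'rV[R]_n) (r c : 'rV[R]_n -> R) x :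
  value gamma U D f r c x = inf [set J gamma U r c f x phi | phi in nonanticipative U D].
Proof. by []. Qed.

Lemma ctrl_nonempty (R : realType) (m : nat) (U : set 'rV[R]_m) :
  U !=set0 -> ctrl_seqs U !=set0.
Proof. by case=> u0 Uu0; exists (fun _ => u0). Qed.

Lemma NA_nonempty (R : realType) (m l : nat) (U : set 'rV[R]_m) (D : set 'rV[R]_l) :
  D !=set0 -> nonanticipative U D !=set0.
Proof. by case=> d0 Dd0; exists (fun _ _ => d0); split. Qed.

Lemma J_bound (R : realType) (n m l : nat) (gamma M : R) (U : set 'rV[R]_m) (r c : 'rV[R]_n -> R)
  (f : 'rV[R]_n -> 'rV[R]_m -> 'rV[R]_l -> 'rV[R]_n) x phi :
  0 <= gamma -> gamma <= 1 -> (forall z, `|r z| <= M) -> (forall z, `|c z| <= M) ->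
  U !=set0 -> `|J gamma U r c f x phi| <= M.
Proof.
move=> g0 g1 hr hc U0; apply: norm_sup_img; first exact: ctrl_nonempty.
by move=> u _; apply: payoff_bound.
Qed.

Lemma value_bound (R : realType) (n m l : nat) (gamma M : R) (U : set 'rV[R]_m) (D : set 'rV[R]_l)
  (f : 'rV[R]_n -> 'rV[R]_m -> 'rV[R]_l -> 'rV[R]_n) (r c : 'rV[R]_n -> R) x :
  0 <= gamma -> gamma <= 1 -> (forall z, `|r z| <= M) -> (forall z, `|c z| <= M) ->
  U !=set0 -> D !=set0 -> `|value gamma U D f r c x| <= M.
Proof.
move=> g0 g1 hr hc U0 D0; rewrite valueE; apply: norm_inf_img; first exact: NA_nonempty.
by move=> phi _; apply: J_bound.
Qed.

Lemma norm_le (R : realType) (a M : R) : `|a| <= M -> a <= M.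
Proof. by rewrite ler_norml => /andP[]. Qed.
Lemma norm_ge (R : realType) (a M : R) : `|a| <= M -> - M <= a.
Proof. by rewrite ler_norml => /andP[]. Qed.

Lemma DPP_ge (R : realType) (n m l : nat) (gamma M : R) (U : set 'rV[R]_m) (D : set 'rV[R]_l)
  (f : 'rV[R]_n -> 'rV[R]_m -> 'rV[R]_l -> 'rV[R]_n) (r c : 'rV[R]_n -> R) x :
  0 <= gamma -> gamma <= 1 -> (forall z, `|r z| <= M) -> (forall z, `|c z| <= M) ->
  U !=set0 -> D !=set0 ->
  gB gamma (c x) (r x)
    (sup [set inf [set value gamma U D f r c (f x u d) | d in D] | u in U])
  <= value gamma U D f r c x.
Proof.
move=> g0 g1 hr hc U0 D0.
have Vb : forall z, `|value gamma U D f r c z| <= M by move=> z; exact: value_bound.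
have Jb : forall z phi, `|J gamma U r c f z phi| <= M by move=> z phi; exact: J_bound.
have Pb : forall z u d, `|payoff gamma r c f z u d| <= M by move=> z u d; exact: payoff_bound.
rewrite valueE; apply: inf_img_ge; first exact: NA_nonempty.
move=> phi [phiD phiNA].
apply: (gB_sup g0 (M := M)) => //.
  move=> u0 _; apply: norm_le; apply: norm_inf_img => // d _; exact: Vb.
move=> u0 Uu0.
have sc : forall u', ctrl_seqs U u' -> ctrl_seqs U (scons u0 u') by move=> u' hu' t; case: t => [|t] /=; [exact: Uu0 | exact: hu'].
pose ub := fun _ : nat => u0.
have hub : ctrl_seqs U ub by [].
pose d0 := phi (scons u0 ub) 0%N.
pose phi' := fun u' => shift (phi (scons u0 u')).
have phi'NA : nonanticipative U D phi'.
  split; first by move=> u' hu' t; exact: phiD (sc _ hu') t.+1.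
  move=> u' ub' T hu hub' hag t tT; rewrite /phi' /shift.
  apply: (phiNA _ _ T.+1) => //; [exact: sc | exact: sc | ].
  by move=> [|s] hs //=; apply: hag.
have hd0 : forall u', ctrl_seqs U u' -> phi (scons u0 u') 0%N = d0.
  move=> u' hu'; apply: (phiNA _ _ 0%N) => //; [exact: sc | exact: sc | ].
  by move=> [|s].
have Dd0 : D d0 by apply: phiD; exact: sc.
pose y := f x u0 d0.
have key : forall u', ctrl_seqs U u' ->
    gB gamma (c x) (r x) (payoff gamma r c f y u' (phi' u')) <= J gamma U r c f x phi.
  move=> u' hu'.
  have h := le_sup_img (A := ctrl_seqs U) (F := fun u => payoff gamma r c f x u (phi u))
    (fun u _ => norm_le (Pb x u (phi u))) (sc u' hu').
  rewrite (payoff_rec _ _ _ _ g0 g1 hr hc) (hd0 u' hu') in h.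
  exact: h.
have h2 : gB gamma (c x) (r x) (J gamma U r c f y phi') <= J gamma U r c f x phi.
  apply: (gB_sup g0 (M := M)) => //; first exact: ctrl_nonempty.
  by move=> u _; apply: norm_le; apply: Pb.
apply: le_trans h2; apply: gB_mono => //.
apply: (le_trans (inf_img_le (fun d _ => norm_ge (Vb (f x u0 d))) Dd0)).
rewrite -/y valueE.
exact: (inf_img_le (fun phi _ => norm_ge (Jb y phi)) phi'NA).
Qed.

Lemma DPP_le (R : realType) (n m l : nat) (gamma M : R) (U : set 'rV[R]_m) (D : set 'rV[R]_l)
  (f : 'rV[R]_n -> 'rV[R]_m -> 'rV[R]_l -> 'rV[R]_n) (r c : 'rV[R]_n -> R) x :
  0 <= gamma -> gamma <= 1 -> (forall z, `|r z| <= M) -> (forall z, `|c z| <= M) ->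
  U !=set0 -> D !=set0 ->
  value gamma U D f r c x <=
  gB gamma (c x) (r x)
    (sup [set inf [set value gamma U D f r c (f x u d) | d in D] | u in U]).
Proof.
move=> g0 g1 hr hc U0 D0.
have Vb : forall z, `|value gamma U D f r c z| <= M by move=> z; exact: value_bound.
have Jb : forall z phi, `|J gamma U r c f z phi| <= M by move=> z phi; exact: J_bound.
have Pb : forall z u d, `|payoff gamma r c f z u d| <= M by move=> z u d; exact: payoff_bound.
set V := value gamma U D f r c.
set Q := sup _.
apply/ler_addgt0Pr => e e0.
pose ep := e / 2.
have ep0 : 0 < ep by rewrite /ep divr_gt0.
have hd : forall u0 : 'rV[R]_m, exists d : 'rV[R]_l, U u0 ->
    D d /\ V (f x u0 d) < inf [set V (f x u0 d) | d in D] + ep.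
  move=> u0; case: (pselect (U u0)) => Uu0; last by case: D0 => d Dd; exists d.
  have : inf [set V (f x u0 d) | d in D] < inf [set V (f x u0 d) | d in D] + ep.
    by rewrite ltrDl.
  case/inf_lt; first by case: D0 => d Dd; exists (V (f x u0 d)), d.
  by move=> _ [d Dd <-] h; exists d.
case: (choice hd) => d0 hd0.
have hp : forall z, exists phi, nonanticipative U D phi /\ J gamma U r c f z phi < V z + ep.
  move=> z.
  have : V z < V z + ep by rewrite ltrDl.
  rewrite {1}/V valueE; case/inf_lt; first by case: (NA_nonempty U D0) => p Hp; exists (J gamma U r c f z p), p.
  by move=> _ [p Hp <-] h; exists p.
case: (choice hp) => ps hps.
pose phi := fun u : nat -> 'rV[R]_m =>
  scons (d0 (u 0%N)) (ps (f x (u 0%N) (d0 (u 0%N))) (shift u)).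
have shc : forall u, ctrl_seqs U u -> ctrl_seqs U (shift u) by move=> u hu t; exact: hu.
have phiNA : nonanticipative U D phi.
  split.
    move=> u hu [|t] /=; first by case: (hd0 (u 0%N) (hu 0%N)).
    by case: (hps (f x (u 0%N) (d0 (u 0%N)))) => [[hD _] _]; apply: hD; exact: shc.
  move=> u ub T hu hub hag [|t] tT /=; first by rewrite (hag 0%N).
  case: T tT hag => [//|T] tT hag.
  rewrite -(hag 0%N) //.
  case: (hps (f x (u 0%N) (d0 (u 0%N)))) => [[_ hN] _].
  apply: (hN _ _ T) => //; [exact: shc | exact: shc | ].
  by move=> s hs; apply: hag.
have HJ : J gamma U r c f x phi <= gB gamma (c x) (r x) (Q + 2 * ep).
  rewrite /J; apply: sup_img_le; first exact: ctrl_nonempty.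
  move=> u hu; rewrite (payoff_rec _ _ _ _ g0 g1 hr hc); apply: gB_mono => //.
  set y := f x (u 0%N) (d0 (u 0%N)).
  have h1 : payoff gamma r c f y (shift u) (ps y (shift u)) <= J gamma U r c f y (ps y).
    exact: (le_sup_img (A := ctrl_seqs U) (F := fun u => payoff gamma r c f y u (ps y u))
      (fun u _ => norm_le (Pb y u (ps y u))) (shc u hu)).
  have h2 := (hps y).2.
  have h3 := (hd0 (u 0%N) (hu 0%N)).2.
  have h4 : inf [set V (f x (u 0%N) d) | d in D] <= Q.
    rewrite /Q; apply: (le_sup_img (A := U) (F := fun u0 => inf [set V (f x u0 d) | d in D])) => //.
      move=> u0 _; apply: norm_le; apply: norm_inf_img => // d _; exact: Vb.
  rewrite -/y in h3; change (payoff gamma r c f y (shift u) (ps y (shift u)) <= Q + 2 * ep).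
  lra.
have HV : V x <= J gamma U r c f x phi.
  rewrite /V valueE; exact: (inf_img_le (fun phi _ => norm_ge (Jb x phi)) phiNA).
have := gB_shift (c x) (r x) Q (2 * ep) g0.
have : gamma * (2 * ep) <= 2 * ep by rewrite ler_piMl // mulr_ge0 // ltW.
have : 2 * ep = e by rewrite /ep mulrC divfK // pnatr_eq0.
move: HV HJ; mm.
Qed.

Lemma Sop_shift (R : realType) (n m l : nat) (U : set 'rV[R]_m) (D : set 'rV[R]_l)
  (f : 'rV[R]_n -> 'rV[R]_m -> 'rV[R]_l -> 'rV[R]_n) (W1 W2 : 'rV[R]_n -> R) (M1 M2 a : R) x :
  U !=set0 -> D !=set0 -> (forall z, `|W1 z| <= M1) -> (forall z, `|W2 z| <= M2) ->
  (forall z, W1 z <= W2 z + a) ->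
  sup [set inf [set W1 (f x u d) | d in D] | u in U] <=
  sup [set inf [set W2 (f x u d) | d in D] | u in U] + a.
Proof.
move=> U0 D0 h1 h2 hle.
apply: sup_img_le => // u Uu.
have e1 : inf [set W1 (f x u d) | d in D] <= inf [set W2 (f x u d) | d in D] + a.
  rewrite -lerBlDr; apply: inf_img_ge => // d Dd; rewrite lerBlDr.
  exact: (le_trans (inf_img_le (fun d _ => norm_ge (h1 (f x u d))) Dd) (hle _)).
have e2 : inf [set W2 (f x u d) | d in D] <= sup [set inf [set W2 (f x u d) | d in D] | u in U].
  apply: (le_sup_img (A := U) (F := fun u => inf [set W2 (f x u d) | d in D])) => //.
  move=> u0 _; apply: norm_le; apply: norm_inf_img => // d _; exact: h2.
lra.
Qed.

Ltac mmn := rewrite ?minEle ?maxEle; repeat match goal with |- context [if ?a <= ?b then _ else _] => case: (leP a b) end; move=> *; nra.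

Unset Implicit Arguments.

Theorem theorem4 (R : realType) (n m l : nat)
  (U : set 'rV[R]_m) (D : set 'rV[R]_l)
  (f : 'rV[R]_n -> 'rV[R]_m -> 'rV[R]_l -> 'rV[R]_n)
  (r c : 'rV[R]_n -> R) (gamma lam : R) :
  compact U -> U !=set0 -> compact D -> D !=set0 ->
  lipschitz_in_state U D f ->
  sup_bounded r -> lipschitz_fun r ->
  sup_bounded c -> lipschitz_fun c ->
  0 <= gamma -> gamma < 1 -> 0 <= lam ->
  forall V_CQL : 'rV[R]_n -> R,
    sup_bounded V_CQL ->
    (forall x, V_CQL x = bellman_cql gamma lam U D f r c V_CQL x) ->
    forall x : 'rV[R]_n,
      value gamma U D f r c x - lam / (1 - gamma) <= V_CQL x /\
      V_CQL x <= value gamma U D f r c x - lam.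
Proof.
move=> _ U0 _ D0 _ [Mr hr] _ [Mc hc] _ g0 g1 l0 W [Mw hw] hW x.
pose M := Mr + Mc.
have hr' : forall z, `|r z| <= M.
  by move=> z; have := hr z; have := normr_ge0 (c z); have := hc z; rewrite /M; lra.
have hc' : forall z, `|c z| <= M.
  by move=> z; have := hr z; have := normr_ge0 (r z); have := hc z; rewrite /M; lra.
have g1' : gamma <= 1 by exact: ltW.
set V := value gamma U D f r c.
have Vb : forall z, `|V z| <= M by move=> z; exact: value_bound.
pose S (Wf : 'rV[R]_n -> R) z := sup [set inf [set Wf (f z u d) | d in D] | u in U].
have DPP : forall z, V z = gB gamma (c z) (r z) (S V z).
  by move=> z; apply/le_anti/andP; split; [exact: (DPP_le f z g0 g1' hr' hc' U0 D0) | exact: (DPP_ge f z g0 g1' hr' hc' U0 D0)].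
have hW' : forall z, W z = gB gamma (c z) (r z) (S W z) - lam by exact: hW.
have X0 : [set: 'rV[R]_n] !=set0 by exists x.
split.
- set k := lam / (1 - gamma).
  have k0 : 0 <= k by rewrite /k divr_ge0 // subr_ge0.
  have lk : lam = k - gamma * k.
    have hg : 1 - gamma != 0 by rewrite subr_eq0 eq_sym lt_eqF.
    rewrite /k; field; exact: hg.
  pose E := sup [set V z - k - W z | z in [set: 'rV[R]_n]].
  have Eub : forall z, V z - k - W z <= E.
    move=> z; apply: (le_sup_img (A := [set: 'rV[R]_n]) (F := fun z => V z - k - W z) (M := M - k + Mw)) => //.
    by move=> z' _; have := norm_le (Vb z'); have := norm_ge (hw z'); lra.
  have hle : forall z, V z <= W z + (k + E) by move=> z; have := Eub z; lra.
  have hS : forall z, S V z <= S W z + (k + E).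
    by move=> z; exact: (Sop_shift f z U0 D0 Vb hw hle).
  have hz : forall z, V z - k - W z <= lam - k + Num.max (gamma * (k + E)) 0.
    move=> z; rewrite (DPP z) (hW' z).
    have := gB_mono (c z) (r z) g0 (hS z).
    have := gB_shift (c z) (r z) (S W z) (k + E) g0.
    lra.
  have : E <= lam - k + Num.max (gamma * (k + E)) 0.
    by apply: sup_img_le => // z _; exact: hz.
  have := Eub x; move: lk k0 g0 g1; mmn.
- pose E := sup [set W z - (V z - lam) | z in [set: 'rV[R]_n]].
  have Eub : forall z, W z - (V z - lam) <= E.
    move=> z; apply: (le_sup_img (A := [set: 'rV[R]_n]) (F := fun z => W z - (V z - lam)) (M := Mw + M + lam)) => //.
    by move=> z' _; have := norm_ge (Vb z'); have := norm_le (hw z'); lra.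
  have hle : forall z, W z <= V z + (E - lam) by move=> z; have := Eub z; lra.
  have hS : forall z, S W z <= S V z + (E - lam).
    by move=> z; exact: (Sop_shift f z U0 D0 hw Vb hle).
  have hz : forall z, W z - (V z - lam) <= Num.max (gamma * (E - lam)) 0.
    move=> z; rewrite (DPP z) (hW' z).
    have := gB_mono (c z) (r z) g0 (hS z).
    have := gB_shift (c z) (r z) (S V z) (E - lam) g0.
    lra.
  have : E <= Num.max (gamma * (E - lam)) 0.
    by apply: sup_img_le => // z _; exact: hz.
  have := Eub x; move: l0 g0 g1; mmn.
Qed.
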